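(* A semigroup $X$ is inverse if and only if there is an inverse subsemigroup $S\subset\upsilon(X)$ with $X\subset S$ (where $X$ is identified with the set of principal ultrafilters $\langle x\rangle$, $x\in X$).
   Context: An upfamily on $X$ is a family of nonempty subsets of $X$ closed under taking supersets in $X$; $\upsilon(X)$ is the set of all upfamilies, with operation $\mathcal A*\mathcal B=\big\langle \bigcup_{a\in A} a*B_a : A\in\mathcal A,\ \{B_a\}_{a\in A}\subset\mathcal B\big\rangle$, where $\langle\mathcal C\rangle=\{A\subset X:\exists C\in\mathcal C,\ C\subset A\}$; $x\in X$ is identified with $\langle x\rangle=\{A\subset X:x\in A\}$. A semigroup $S$ is inverse if each $x\in S$ has a unique $x^{-1}\in S$ with $xx^{-1}x=x$ and $x^{-1}xx^{-1}=x^{-1}$. *)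

(* Defs.v *)
From Stdlib Require Import Classical FunctionalExtensionality PropExtensionality.

Section Upfam.
Variable X : Type.
Variable op : X -> X -> X.

Definition is_semigroup : Prop :=
  forall x y z, op (op x y) z = op x (op y z).

Definition is_inverse_semigroup : Prop :=
  forall x, exists! y, op (op x y) x = x /\ op (op y x) y = y.

Definition is_upfamily (F : (X -> Prop) -> Prop) : Prop :=
  (forall A, F A -> exists x, A x) /\
  (forall A B, F A -> (forall x, A x -> B x) -> F B).

Definition principal (x : X) : (X -> Prop) -> Prop := fun A => A x.

(* A * B = < { U_{a in A} a * B_a : A in F, (B_a)_{a in A} in G } > *)
Definition upfam_mul (F G : (X -> Prop) -> Prop) : (X -> Prop) -> Prop :=
  fun C => exists A, F A /\
    exists Bf : X -> (X -> Prop),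
      (forall a, A a -> G (Bf a)) /\
      (forall a b, A a -> Bf a b -> C (op a b)).

Definition is_inverse_subsemigroup_upsilon
    (S : ((X -> Prop) -> Prop) -> Prop) : Prop :=
  (forall F, S F -> is_upfamily F) /\
  (forall F G, S F -> S G -> S (upfam_mul F G)) /\
  (forall F, S F -> exists! G, S G /\
       upfam_mul (upfam_mul F G) F = F /\ upfam_mul (upfam_mul G F) G = G).
End Upfam.

(* Main.v *)
Require Import Defs.
From Stdlib Require Import Classical FunctionalExtensionality PropExtensionality.

Lemma mul_principal (X : Type) (op : X -> X -> X) x y :
  upfam_mul X op (principal X x) (principal X y) = principal X (op x y).
Proof.
  apply functional_extensionality; intro C; apply propositional_extensionality.
  unfold upfam_mul, principal; split.
  - intros [A [HA [Bf [H1 H2]]]]. apply H2; auto.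
  - intro HC. exists (fun t => t = x). split; [reflexivity|].
    exists (fun _ t => t = y). split; [intros; reflexivity|].
    intros a b -> ->; exact HC.
Qed.

Lemma principal_inj (X : Type) (a b : X) : principal X a = principal X b -> a = b.
Proof.
  intro H. assert (E := f_equal (fun F => F (fun t => t = a)) H).
  simpl in E. unfold principal in E. symmetry. rewrite <- E. reflexivity.
Qed.

Theorem corollary3p2 (X : Type) (op : X -> X -> X) (Hsg : is_semigroup X op) :
  is_inverse_semigroup X op <->
  exists S : ((X -> Prop) -> Prop) -> Prop,
    is_inverse_subsemigroup_upsilon X op S /\ (forall x, S (principal X x)).
Proof.
  split.
  - intro Hinv. exists (fun F => exists x, F = principal X x). split.
    + split; [|split].
      * intros F [x ->]. split.
        -- intros A HA. exists x. exact HA.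
        -- intros A B HA HB. apply HB. exact HA.
      * intros F G [x ->] [y ->]. exists (op x y). apply mul_principal.
      * intros F [x ->]. destruct (Hinv x) as [y [[Hy1 Hy2] Hu]].
        exists (principal X y). split.
        -- split; [eauto|]. rewrite !mul_principal, Hy1, Hy2. split; reflexivity.
        -- intros G' [[z ->] [E1 E2]]. rewrite !mul_principal in E1, E2.
           apply principal_inj in E1. apply principal_inj in E2.
           f_equal. apply Hu. split; assumption.
    + intro x. eauto.
  - intros [S [[Hup [Hmul Hinv]] Hprin]] x.
    destruct (Hinv _ (Hprin x)) as [G [[HG [E1 E2]] _]].
    assert (Hb : exists b, op (op x b) x = x).
    { assert (Hs : upfam_mul X op (upfam_mul X op (principal X x) G) (principal X x)
                     (fun t => t = x)) by (rewrite E1; reflexivity).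
      destruct Hs as [A [HA [Bf [H1 H2]]]].
      destruct HA as [A' [HA' [Bf' [H3 H4]]]].
      destruct (Hup _ HG) as [Hne _].
      destruct (Hne _ (H3 x HA')) as [b Hb].
      exists b. apply H2; [apply H4; auto|]. apply H1. apply H4; auto. }
    destruct Hb as [b Hb].
    assert (Hb' : op x (op b x) = x) by (rewrite <- Hsg; exact Hb).
    assert (Hb'' : forall w, op x (op b (op x w)) = op x w) by (intro w; rewrite <- (Hsg b x w), <- Hsg, Hb'; reflexivity).
    exists (op (op b x) b). split.
    + split.
      * rewrite !Hsg; rewrite ?Hb'', ?Hb'; reflexivity.
      * rewrite !Hsg; rewrite !Hb''; reflexivity.
    + intros y [Hy1 Hy2].
      assert (Hu : forall z, op (op x z) x = x -> op (op z x) z = z ->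
                 principal X z = G).
      { intros z Hz1 Hz2. destruct (Hinv _ (Hprin x)) as [G0 [_ U]].
        transitivity G0; [symmetry|]; apply U.
        - split; [apply Hprin|]. rewrite !mul_principal, Hz1, Hz2. split; reflexivity.
        - split; [exact HG|split; assumption]. }
      apply principal_inj. rewrite (Hu y Hy1 Hy2). apply Hu.
      * rewrite !Hsg; rewrite ?Hb'', ?Hb'; reflexivity.
      * rewrite !Hsg; rewrite ?Hb'', ?Hb'; reflexivity.
Qed.
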